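(* For integers $m\ge1$ and $1\le i\le m$, let $F_{m,i}(n,k)$ be the number of partitions $\lambda$ of $n$ with $X_{m,i}(\lambda)=k$. Then, as formal power series in $q,u$, $$\sum_{n,k\ge0}F_{m,i}(n,k)q^nu^k=\prod_{a\ge0}\left(\prod_{b=1}^{i-1}\frac{1}{1-u^aq^{am+b}}\prod_{b=i}^{m}\frac{1}{1-u^{a+1}q^{am+b}}\right).$$
   Context: For a partition $\lambda:\ n=\lambda_1+\dots+\lambda_k$ with $\lambda_1\ge\dots\ge\lambda_k\ge1$, $X_{m,i}(\lambda)=\sum_{j\equiv i\pmod m}\lambda_j$, the sum of the parts whose index is congruent to $i$ modulo $m$. *)

(* Defs.v *)
From mathcomp Require Import all_boot.
Set Implicit Arguments. Unset Strict Implicit. Unset Printing Implicit Defensive.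

Definition is_partition (n : nat) (l : seq nat) : bool :=
  [&& sorted geq l, all (fun x => 0 < x) l & sumn l == n].

(* X_{m,i}(lambda): sum of parts lambda_j (1-indexed j) with j = i mod m. *)
Definition Xmi (m i : nat) (l : seq nat) : nat :=
  \sum_(0 <= j < size l | j.+1 == i %[mod m]) nth 0 l j.

(* Formal power series in two variables q, u with nat coefficients:
   f n k is the coefficient of q^n u^k. *)
Definition fps2 := nat -> nat -> nat.

Definition fps2_one : fps2 := fun n k => ((n == 0) && (k == 0) : nat).

Definition fps2_mul (f g : fps2) : fps2 := fun n k =>
  \sum_(0 <= a < n.+1) \sum_(0 <= b < k.+1) f a b * g (n - a) (k - b).

(* 1 / (1 - u^c q^d) = sum_{j>=0} u^(c j) q^(d j), for d >= 1. *)
Definition fps2_geom (c d : nat) : fps2 := fun n k =>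
  ((d %| n) && (k == c * (n %/ d)) : nat).

Definition fps2_geom_prod (s : seq (nat * nat)) : fps2 :=
  foldr (fun cd acc => fps2_mul (fps2_geom cd.1 cd.2) acc) fps2_one s.

(* The factors indexed by a: prod_{b=1}^{i-1} 1/(1-u^a q^(am+b)) *
   prod_{b=i}^{m} 1/(1-u^(a+1) q^(am+b)). *)
Definition factors_a (m i a : nat) : seq (nat * nat) :=
  [seq (a, a * m + b) | b <- iota 1 (i - 1)] ++
  [seq (a.+1, a * m + b) | b <- iota i (m - i + 1)].

Definition partial_prod (m i N : nat) : fps2 :=
  fps2_geom_prod (flatten [seq factors_a m i a | a <- iota 0 N]).

(* Main.v *)
Require Import Defs.
From mathcomp Require Import all_boot zify.

Fixpoint wsum (ws e : seq nat) : nat :=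
  match ws, e with
  | w :: ws', x :: e' => w * x + wsum ws' e'
  | _, _ => 0
  end.

Definition pairs (c d n k : nat) : seq (nat * nat) :=
  [seq p <- [seq (a, b) | a <- iota 0 n.+1, b <- iota 0 k.+1]
     | (d %| p.1) && (p.2 == c * (p.1 %/ d))].

Fixpoint enum_ms (fs : seq (nat * nat)) (n k : nat) : seq (seq nat) :=
  match fs with
  | [::] => if (n == 0) && (k == 0) then [:: [::]] else [::]
  | cd :: fs' => [seq (p.1 %/ cd.2) :: e | p <- pairs cd.1 cd.2 n k,
                                         e <- enum_ms fs' (n - p.1) (k - p.2)]
  end.

Lemma size_enum fs n k : size (enum_ms fs n k) = fps2_geom_prod fs n k.
Proof.
elim: fs n k => [|[c d] fs IH] n k /=.
  by rewrite /fps2_one; case: (_ && _).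
rewrite size_allpairs_dep sumnE big_map /pairs big_filter big_mkcond big_allpairs_dep.
rewrite /fps2_mul; apply: eq_bigr => a _; apply: eq_bigr => b _ /=.
rewrite IH /fps2_geom /=.
by case: (_ && _); rewrite ?mul1n ?mul0n.
Qed.

Lemma mem_pairs c d n k p :
  (p \in pairs c d n k) = [&& p.1 <= n, p.2 <= k, d %| p.1 & p.2 == c * (p.1 %/ d)].
Proof.
case: p => a b; rewrite /pairs mem_filter /=.
have E : ((a, b) \in [seq (x, y) | x <- iota 0 n.+1, y <- iota 0 k.+1]) = (a <= n) && (b <= k).
  apply/allpairsPdep/andP => [[x [y [Hx Hy [-> ->]]]]|[Ha Hb]].
    by move: Hx Hy; rewrite !mem_iota /= !add0n !ltnS => -> ->.
  by exists a, b; rewrite !mem_iota /= !add0n !ltnS Ha Hb.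
rewrite E; by case: (d %| a); case: (b == _); case: (a <= n); case: (b <= k).
Qed.

Lemma mem_enum fs n k : (forall cd, cd \in fs -> 0 < cd.2) -> forall e,
  (e \in enum_ms fs n k) =
  [&& size e == size fs, wsum (map snd fs) e == n & wsum (map fst fs) e == k].
Proof.
elim: fs n k => [|[c d] fs IH] n k Hpos e /=.
  by case: e => [|x e]; case: n => [|n]; case: k => [|k].
have Hd : 0 < d by apply: (Hpos (c, d)); rewrite in_cons eqxx.
have Hpos' : forall cd, cd \in fs -> 0 < cd.2.
  by move=> cd Hcd; apply: Hpos; rewrite in_cons Hcd orbT.
apply/allpairsPdep/idP => [[p [e' [Hp He' ->]]]|].
  move: Hp; rewrite mem_pairs => /and4P[H1 H2 H3 /eqP H4].
  move: He'; rewrite IH // => /and3P[/eqP Hs /eqP Hn /eqP Hk] /=.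
  rewrite Hs Hn Hk eqxx /=.
  have H5 := divnK H3.
  apply/andP; split; apply/eqP; [lia|].
  rewrite H4 in H2 *; lia.
case: e => [|x e] //= /and3P[Hs /eqP Hn /eqP Hk].
exists (d * x, c * x); exists e; split.
- rewrite mem_pairs /= mulKn // dvdn_mulr // eqxx andbT; apply/andP; split; lia.
- rewrite IH // -eqSS Hs /=; apply/andP; split; apply/eqP; lia.
- by rewrite /= mulKn.
Qed.

Lemma uniq_pairs c d n k : uniq (pairs c d n k).
Proof.
rewrite /pairs filter_uniq // allpairs_uniq ?iota_uniq //.
by move=> [a b] [a' b'] _ _ /= [-> ->].
Qed.

Lemma uniq_enum fs n k : (forall cd, cd \in fs -> 0 < cd.2) -> uniq (enum_ms fs n k).
Proof.
elim: fs n k => [|[c d] fs IH] n k Hpos /=.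
  by case: (_ && _).
have Hd : 0 < d by apply: (Hpos (c, d)); rewrite in_cons eqxx.
have Hpos' : forall cd, cd \in fs -> 0 < cd.2.
  by move=> cd Hcd; apply: Hpos; rewrite in_cons Hcd orbT.
apply: allpairs_uniq_dep; first exact: uniq_pairs.
  by move=> p _; apply: IH.
move=> [p e] [p' e'] /allpairsPdep [x [y [Hx _ Ex]]] /allpairsPdep [x' [y' [Hx' _ Ex']]] /= [E1 E2].
move: E1 E2; case: Ex => -> ->; case: Ex' => -> -> E1 E2.
rewrite !mem_pairs in Hx Hx'.
move: Hx Hx' => /and4P[_ _ H1 /eqP H2] /and4P[_ _ H1' /eqP H2'].
have Ex : x.1 = x'.1 by rewrite -(divnK H1) -(divnK H1') E1.
have Ey : x.2 = x'.2 by rewrite H2 H2' Ex.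
by case: x Ex Ey {H1 H2 E1} => a b; case: x' {H1' H2'} => a' b' /= -> -> ; rewrite E2.
Qed.
Fixpoint R (e : seq nat) : seq nat :=
  match e with [::] => [::] | x :: e' => (x + head 0 (R e')) :: R e' end.
Fixpoint diffs (l : seq nat) : seq nat :=
  match l with [::] => [::] | a :: l' => (a - head 0 l') :: diffs l' end.
Definition Y (P : nat -> bool) (l : seq nat) : nat :=
  \sum_(0 <= j < size l | P j) nth 0 l j.

Lemma size_R e : size (R e) = size e.
Proof. by elim: e => //= x e ->. Qed.

Lemma size_diffs l : size (diffs l) = size l.
Proof. by elim: l => //= x e ->. Qed.

Lemma head_R e : head 0 (R e) = sumn e.
Proof. by elim: e => //= x e ->. Qed.

Lemma sorted_R e : sorted geq (R e).
Proof.
elim: e => //= x e; case: (R e) => //= y s IH.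
by rewrite IH leq_addl.
Qed.

Lemma diffsK e : diffs (R e) = e.
Proof. by elim: e => //= x e ->; rewrite addnK. Qed.

Lemma RK l : sorted geq l -> R (diffs l) = l.
Proof.
elim: l => //= a l IH Hs.
have Hl : sorted geq l by case: l Hs {IH} => //= b l /andP[].
rewrite IH //; congr (_ :: _).
by case: l Hs {IH Hl} => /= [|b l /andP[Hb _]]; [rewrite subn0 addn0 | rewrite subnK].
Qed.

Lemma Y_nil P : Y P [::] = 0.
Proof. by rewrite /Y big_geq. Qed.

Lemma Y_cons P a l : Y P (a :: l) = P 0 * a + Y (fun j => P j.+1) l.
Proof.
rewrite /Y /= big_ltn_cond // big_add1 /=.
by case: (P 0); rewrite ?mul1n ?mul0n ?add0n.
Qed.

Lemma wsum_add a (f : nat -> nat) (ts e : seq nat) : size e <= size ts ->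
  wsum [seq a + f t | t <- ts] e = a * sumn e + wsum [seq f t | t <- ts] e.
Proof.
elim: ts e => [|t ts IH] [|x e] //= Hs; rewrite ?muln0 //.
rewrite IH // mulnDl mulnDr; lia.
Qed.

Lemma count_iotaS P t :
  count P (iota 0 t.+1) = P 0 + count (fun j => P j.+1) (iota 0 t).
Proof.
have E : iota 1 t = [seq j.+1 | j <- iota 0 t] by rewrite -(iotaDl 1).
by rewrite /= E count_map.
Qed.

Lemma Y_R P e :
  Y P (R e) = wsum [seq count P (iota 0 t) | t <- iota 1 (size e)] e.
Proof.
elim: e P => [|x e IH] P /=.
  by rewrite Y_nil.
rewrite Y_cons IH head_R /=.
have -> : [seq count P (iota 0 t) | t <- iota 2 (size e)] =
          [seq P 0 + count (fun j => P j.+1) (iota 0 t) | t <- iota 1 (size e)].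
  rewrite -[2]addn1 iotaDl -map_comp; apply: eq_map => t /=.
  by rewrite add0n -(count_iotaS P t).
rewrite wsum_add ?size_iota //.
case: (P 0); rewrite /= ?mul1n ?mul0n ?addn0 ?add0n; lia.
Qed.

Lemma Y_pad P l z : Y P (l ++ nseq z 0) = Y P l.
Proof.
elim: l P => [|a l IH] P /=.
  elim: z P => [|z IH] P; first by [].
  have -> : nseq z.+1 0 = 0 :: nseq z 0 by [].
  by rewrite Y_cons IH muln0 !Y_nil.
by rewrite !Y_cons IH.
Qed.

Lemma Y_true l : Y (fun _ => true) l = sumn l.
Proof.
elim: l => [|a l IH]; first by rewrite Y_nil.
by rewrite Y_cons /= IH mul1n.
Qed.

Lemma sorted_pad l z : sorted geq l -> sorted geq (l ++ nseq z 0).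
Proof.
have Hz : forall x, path geq x (nseq z 0).
  by elim: z => //= z IH x; rewrite IH andbT.
case: l => [_|a l]; first by move: Hz; case: z => //= z; apply.
rewrite /=; elim: l a => [|b l IH] a /=; first by move=> _; apply: Hz.
by move=> /andP[-> /IH].
Qed.

Lemma sorted0 l : sorted geq (0 :: l) -> l = nseq (size l) 0.
Proof.
elim: l => //= b l IH /andP[]; rewrite leqn0 => /eqP -> H.
by rewrite -IH.
Qed.

Lemma strip_pad l : sorted geq l ->
  l = [seq x <- l | 0 < x] ++ nseq (size l - size [seq x <- l | 0 < x]) 0.
Proof.
elim: l => //= a l IH Hs.
have Hl : sorted geq l by case: l Hs {IH} => //= b l /andP[].
case: a Hs => [|a] Hs /=.
  have H := @sorted0 l Hs.
  by rewrite H filter_nseq /= size_nseq.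
by rewrite subSS -IH.
Qed.

Lemma sumn_filter l : sumn [seq x <- l | 0 < x] = sumn l.
Proof. by elim: l => //= [[|a]] l IH /=; rewrite IH. Qed.
Definition w (m i t : nat) : nat := count (fun j => j.+1 == i %[mod m]) (iota 0 t).

Lemma mod_small_eq m x y : 1 <= x <= m -> 1 <= y <= m ->
  (x == y %[mod m]) = (x == y).
Proof.
move=> Hx Hy.
have E : forall z, 1 <= z <= m -> z %% m = (if z == m then 0 else z).
  move=> z /andP[H1 H2]; case: eqP => [->|Hne]; first by rewrite modnn.
  by rewrite modn_small //; lia.
rewrite (E x Hx) (E y Hy).
case: (x =P m) => Ex; case: (y =P m) => Ey; apply/eqP/eqP; lia.
Qed.

Lemma count_block m i a b : 1 <= i <= m -> b <= m ->
  count (fun j => j.+1 == i %[mod m]) (iota (a * m) b) = (i <= b).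
Proof.
move=> Hi Hb.
rewrite -[a * m]addn0 iotaDl count_map.
rewrite (@eq_in_count _ _ (pred1 i.-1)); last first.
  move=> j; rewrite mem_iota add0n => /andP[_ Hj] /=.
  rewrite -addnS modnMDl mod_small_eq; [apply/eqP/eqP; lia | lia | lia].
rewrite (@count_uniq_mem _ (iota 0 b) i.-1 (iota_uniq 0 b)) mem_iota add0n.
by case: i Hi => [|i] //= _; rewrite ltnS.
Qed.

Lemma w_full m i a : 1 <= i <= m -> w m i (a * m) = a.
Proof.
move=> Hi; rewrite /w; elim: a => [|a IH] //.
rewrite mulSn addnC iotaD add0n count_cat IH count_block //. by case/andP: Hi => _ ->; rewrite addn1.
Qed.

Lemma w_val m i a b : 1 <= i <= m -> b <= m -> w m i (a * m + b) = a + (i <= b).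
Proof.
move=> Hi Hb.
rewrite /w iotaD add0n count_cat count_block // -/(w m i (a * m)) w_full //.
Qed.

Lemma factors_eq m i a : 1 <= i <= m ->
  factors_a m i a = [seq (w m i t, t) | t <- iota (a * m).+1 m].
Proof.
move=> Hi.
have -> : iota (a * m).+1 m = iota (a * m).+1 (i - 1) ++ iota (a * m + i) (m - i + 1).
  rewrite (_ : a * m + i = (a * m).+1 + (i - 1)); last lia.
  rewrite -iotaD; congr iota; lia.
rewrite /factors_a map_cat -[(a * m).+1]addn1 (iotaDl (a * m) 1) (iotaDl (a * m) i) -!map_comp.
congr (_ ++ _); apply/eq_in_map => b; rewrite mem_iota => Hb /=.
  rewrite w_val //; [congr pair; lia | lia].
rewrite w_val //; [congr pair; lia | lia].
Qed.

Lemma flat_eq m i N : 1 <= i <= m ->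
  flatten [seq factors_a m i a | a <- iota 0 N] = [seq (w m i t, t) | t <- iota 1 (N * m)].
Proof.
move=> Hi; elim: N => [|N IH] //.
rewrite -addn1 iotaD map_cat flatten_cat IH /= add0n cats0 factors_eq //.
by rewrite mulnDl mul1n iotaD map_cat add1n.
Qed.

Definition Pmi (m i : nat) := fun j => j.+1 == i %[mod m].
Definition strip (l : seq nat) := [seq x <- l | 0 < x].
Definition fsN m i N := [seq (w m i t, t) | t <- iota 1 (N * m)].
Definition TN m i N n k := [seq strip (R e) | e <- enum_ms (fsN m i N) n k].

Lemma Xmi_Y m i l : Xmi m i l = Y (Pmi m i) l.
Proof. by []. Qed.

Lemma sumn_R e : sumn (R e) = wsum (iota 1 (size e)) e.
Proof.
rewrite -Y_true Y_R; congr wsum.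
rewrite -[RHS]map_id; apply/eq_map => t /=.
by rewrite count_predT size_iota.
Qed.

Lemma Xmi_R m i e : Y (Pmi m i) (R e) = wsum [seq w m i t | t <- iota 1 (size e)] e.
Proof. by rewrite Y_R. Qed.

Lemma Y_strip P e : Y P (strip (R e)) = Y P (R e).
Proof. by rewrite {2}(@strip_pad (R e) (sorted_R e)) Y_pad. Qed.

Lemma size_le_sumn l : all (fun x => 0 < x) l -> size l <= sumn l.
Proof. elim: l => //= a l IH /andP[Ha /IH]; lia. Qed.

Lemma fsN_pos m i N cd : cd \in fsN m i N -> 0 < cd.2.
Proof.
by move=> /mapP [t]; rewrite mem_iota => /andP[H _] ->.
Qed.

Lemma mem_TN m i N n k l : n <= N * m ->
  (l \in TN m i N n k) = is_partition n l && (Xmi m i l == k).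
Proof.
move=> HnD.
have Hs1 : map snd (fsN m i N) = iota 1 (N * m).
  by rewrite /fsN -map_comp map_id.
have Hs2 : map fst (fsN m i N) = [seq w m i t | t <- iota 1 (N * m)].
  by rewrite /fsN -map_comp.
have Hsz : size (fsN m i N) = N * m by rewrite size_map size_iota.
apply/mapP/idP => [[e He ->]|].
  move: He; rewrite mem_enum; last exact: fsN_pos.
  rewrite Hs1 Hs2 Hsz => /and3P[/eqP Hse /eqP Hn /eqP Hk].
  rewrite /is_partition Xmi_Y Y_strip Xmi_R Hse Hk eqxx andbT.
  rewrite sorted_filter ?sorted_R //=; last by move=> x y z H1 H2; apply: leq_trans H2 H1.
  rewrite filter_all /= /strip sumn_filter sumn_R Hse Hn eqxx //.
case/andP => /and3P[Hsort Hpos /eqP Hsum] /eqP HX.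
have Hsl : size l <= N * m by rewrite (leq_trans (@size_le_sumn l Hpos)) // Hsum.
set p := l ++ nseq (N * m - size l) 0.
have Hsp : sorted geq p by apply: sorted_pad.
have HRp : R (diffs p) = p by apply: RK.
have Hszp : size (diffs p) = N * m.
  by rewrite size_diffs size_cat size_nseq subnKC.
exists (diffs p).
  rewrite mem_enum; last exact: fsN_pos.
  rewrite Hs1 Hs2 Hsz Hszp eqxx /=.
  rewrite -Hszp -sumn_R -Xmi_R HRp /p Y_pad -Xmi_Y HX eqxx andbT.
  rewrite sumn_cat (_ : sumn (nseq _ 0) = 0) ?addn0 ?Hsum //; by elim: (N * m - size l).
rewrite HRp /strip /p filter_cat filter_nseq /=. rewrite cats0.
by apply/esym/all_filterP.
Qed.

Lemma uniq_TN m i N n k : uniq (TN m i N n k).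
Proof.
rewrite /TN map_inj_in_uniq; first by apply: uniq_enum; exact: fsN_pos.
move=> e1 e2 H1 H2 E.
rewrite mem_enum in H1; last exact: fsN_pos.
rewrite mem_enum in H2; last exact: fsN_pos.
move: H1 H2 => /and3P[/eqP S1 _ _] /and3P[/eqP S2 _ _].
rewrite -(diffsK e1) -(diffsK e2).
rewrite (@strip_pad (R e1) (sorted_R e1)) (@strip_pad (R e2) (sorted_R e2)).
by rewrite -/(strip (R e1)) -/(strip (R e2)) E !size_R S1 S2.
Qed.

Lemma size_TN m i N n k : 1 <= i <= m ->
  size (TN m i N n k) = partial_prod m i N n k.
Proof.
move=> Hi; by rewrite size_map size_enum /partial_prod flat_eq.
Qed.

Theorem mainTheorem7 (m i : nat) (hm : 1 <= m) (hi1 : 1 <= i) (him : i <= m) :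
  forall n k : nat,
    exists s : seq (seq nat),
      [/\ uniq s,
          (forall l, (l \in s) = is_partition n l && (Xmi m i l == k)) &
          exists N0, forall N, N0 <= N -> size s = partial_prod m i N n k].
Proof.
move=> n k.
have Hi : 1 <= i <= m by rewrite hi1 him.
have HnN : forall N, n <= N -> n <= N * m.
  by move=> N HN; apply: leq_trans HN _; rewrite leq_pmulr.
exists (TN m i n n k); split.
- exact: uniq_TN.
- by move=> l; apply: mem_TN; apply: HnN.
exists n => N HN.
rewrite -size_TN //.
apply: perm_size; apply: uniq_perm; rewrite ?uniq_TN // => l.
by rewrite !mem_TN ?HnN.
Qed.
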